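(* Let $\mathcal{T}=(\mathcal{V},\mathcal{E})$ be a grid of depth $d$ obeying the LC-PF model and covariance assumption of the context, with zero-mean Gaussian injection deviations. Let $r_{\max},x_{\max}$ be the maximum line resistance and reactance, and set $k_2=\max(r_{\max}^2,x_{\max}^2)\max_{c}\big(\Omega_p(c,c)+\Omega_q(c,c)+2\Omega_{pq}(c,c)\big)$, the inner maximum being over non-root nodes $c$. Then every diagonal entry of the voltage magnitude covariance matrix satisfies $\Omega_v(a,a)\le d^2|\mathcal{V}|k_2$.
   Context: $\mathcal{T}=(\mathcal{V},\mathcal{E})$ is a tree with a distinguished root (substation) of degree one. Its depth $d$ is the maximum number of edges on a path from the root. Each edge $(ab)$ has resistance $r_{ab}>0$ and reactance $x_{ab}>0$. Let $H_{1/r},H_{1/x}$ be the weighted Laplacians with edge weights $1/r_{ab}$, $1/x_{ab}$, with the root row and column removed. Non-root nodes have random injections $p_a,q_a$. The LC-PF model gives the voltage magnitude deviations $v=H_{1/r}^{-1}p+H_{1/x}^{-1}q$ at non-root nodes, and $\Omega_v$ is the covariance matrix of $v$. Covariance assumption: $\Omega_p,\Omega_q$ are the covariances of $p,q$, and $\Omega_{pq}=\mathbb{E}[(p-\mathbb{E}p)(q-\mathbb{E}q)^T]=\Omega_{qp}^T$. For distinct non-root $a,b$, $\Omega_p(a,b)=\Omega_q(a,b)=\Omega_{qp}(a,b)=0$, and $\Omega_{qp}(a,a)\ge0$. *)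

(* Defs.v *)
From HB Require Import structures.
From mathcomp Require Import all_boot all_order all_algebra.
From mathcomp Require Import all_classical all_reals all_analysis.
Set Implicit Arguments. Unset Strict Implicit. Unset Printing Implicit Defensive.
Import Order.TTheory GRing.Theory Num.Theory.
Local Open Scope classical_set_scope.
Local Open Scope ring_scope.

(* Vertices of the grid are 'I_n.+1; the root (substation) is ord0 and the
   non-root nodes are the lift ord0 i, i : 'I_n. *)

Definition nonroot {n : nat} (i : 'I_n) : 'I_n.+1 := lift ord0 i.

(* a tree: connected, with exactly n (undirected) edges on n.+1 vertices
   (edges counted as ordered pairs, hence 2 * n) *)
Definition is_tree (n : nat) (e : rel 'I_n.+1) : Prop :=
  [/\ symmetric e, irreflexive e, (forall u v, connect e u v) &
      #|[set uv : 'I_n.+1 * 'I_n.+1 | e uv.1 uv.2]| = (2 * n)%N].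

Definition root_degree_one (n : nat) (e : rel 'I_n.+1) : Prop :=
  #|[set u | e ord0 u]| = 1%N.

Definition depth (n : nat) (e : rel 'I_n.+1) (dd : nat) : Prop :=
  (forall v, exists s, [/\ path e ord0 s, last ord0 s = v & (size s <= dd)%N]) /\
  (exists v, forall s, path e ord0 s -> last ord0 s = v -> (dd <= size s)%N).

Definition laplacian (R : ringType) (n : nat) (e : rel 'I_n.+1)
  (w : 'I_n.+1 -> 'I_n.+1 -> R) : 'M[R]_n.+1 :=
  \matrix_(a, b) (if a == b then \sum_(u | e a u) w a u
                  else if e a b then - w a b else 0).

Definition red_laplacian (R : ringType) (n : nat) (e : rel 'I_n.+1)
  (w : 'I_n.+1 -> 'I_n.+1 -> R) : 'M[R]_n :=
  \matrix_(i, j) laplacian e w (nonroot i) (nonroot j).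

Definition line_max (R : realDomainType) (n : nat) (e : rel 'I_n.+1)
  (r : 'I_n.+1 -> 'I_n.+1 -> R) : R :=
  \big[Num.max/0]_(ab : 'I_n.+1 * 'I_n.+1 | e ab.1 ab.2) r ab.1 ab.2.

(* LC-PF: v = H_{1/r}^{-1} p + H_{1/x}^{-1} q (as random variables) *)
Definition lcpf_v (R : realType) (T : Type) (n : nat) (e : rel 'I_n.+1)
  (r x : 'I_n.+1 -> 'I_n.+1 -> R) (p q : 'I_n -> T -> R) (a : 'I_n) : T -> R :=
  fun t => \sum_(c < n)
     (invmx (red_laplacian e (fun u w => (r u w)^-1)) a c * p c t +
      invmx (red_laplacian e (fun u w => (x u w)^-1)) a c * q c t).

Definition centered_gaussian (d : measure_display) (T : measurableType d)
  (R : realType) (P : probability T R) (Z : T -> R) : Prop :=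
  (exists s : R, 0 < s /\
     forall A : set R, measurable A -> P (Z @^-1` A) = normal_prob 0 s A) \/
  (forall A : set R, measurable A -> P (Z @^-1` A) = @dirac _ R 0 R A).

(* (p, q) is a zero-mean jointly Gaussian vector: every linear combination
   of its entries is a centered Gaussian *)
Definition jointly_centered_gaussian (d : measure_display) (T : measurableType d)
  (R : realType) (P : probability T R) (n : nat) (p q : 'I_n -> T -> R) : Prop :=
  forall wp wq : 'I_n -> R,
    centered_gaussian P (fun t => \sum_(c < n) (wp c * p c t + wq c * q c t)).

(* Main.v *)
Require Import Defs.
From HB Require Import structures.
From mathcomp Require Import all_boot all_order all_algebra.
From mathcomp Require Import all_classical all_reals all_analysis.
From mathcomp.algebra_tactics Require Import ring lra.
Set Implicit Arguments. Unset Strict Implicit. Unset Printing Implicit Defensive.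
Import Order.TTheory GRing.Theory Num.Theory.
Local Open Scope ring_scope.

Lemma cs_seq (R : realFieldType) (I : Type) (s : seq I) (w a b : I -> R) :
  (forall i, 0 <= w i) ->
  (\sum_(i <- s) w i * a i * b i) ^+ 2 <=
  (\sum_(i <- s) w i * a i ^+ 2) * (\sum_(i <- s) w i * b i ^+ 2).
Proof.
move=> w0.
have H : 0 <= \sum_(i <- s) \sum_(j <- s) w i * w j * (a i * b j - a j * b i) ^+ 2.
  by apply: sumr_ge0 => i _; apply: sumr_ge0 => j _;
     rewrite mulr_ge0 ?sqr_ge0 ?mulr_ge0.
have E : \sum_(i <- s) \sum_(j <- s) w i * w j * (a i * b j - a j * b i) ^+ 2 =
  \sum_(i <- s) \sum_(j <- s) ((w i * a i ^+ 2) * (w j * b j ^+ 2)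
     + (w j * a j ^+ 2) * (w i * b i ^+ 2)
     - (2 * (w i * a i * b i)) * (w j * a j * b j)).
  by apply: eq_bigr => i _; apply: eq_bigr => j _; ring.
rewrite E in H.
move: H.
under eq_bigr do rewrite !big_split /= sumrN.
rewrite !big_split /= sumrN.
rewrite -!big_distrlr /=.
rewrite (exchange_big _ _ _ _ _ (fun i j => (w j * a j ^+ 2) * (w i * b i ^+ 2))) /=.
rewrite -big_distrlr /= -mulr_sumr.
move=> H; rewrite expr2; nra.
Qed.

Definition ext (R : ringType) n (f : 'I_n -> R) : 'I_n.+1 -> R :=
  fun a => if unlift ord0 a is Some i then f i else 0.

Lemma ext_lift (R : ringType) n (f : 'I_n -> R) i : ext f (lift ord0 i) = f i.
Proof. by rewrite /ext liftK. Qed.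

Lemma ext0 (R : ringType) n (f : 'I_n -> R) : ext f ord0 = 0.
Proof. by rewrite /ext unlift_none. Qed.

Definition ew (R : ringType) n (e : rel 'I_n.+1) (w : 'I_n.+1 -> 'I_n.+1 -> R) a b :=
  if e a b then w a b else 0.

Definition En (R : ringType) n (e : rel 'I_n.+1) (w : 'I_n.+1 -> 'I_n.+1 -> R)
  (F G : 'I_n.+1 -> R) :=
  \sum_a \sum_b ew e w a b * (F a - F b) * (G a - G b).

Lemma quad (R : comRingType) n (e : rel 'I_n.+1) (w : 'I_n.+1 -> 'I_n.+1 -> R)
  (f g : 'I_n -> R) :
  symmetric e -> irreflexive e -> (forall a b, w a b = w b a) ->
  2 * (\sum_i \sum_j f i * red_laplacian e w i j * g j) = En e w (ext f) (ext g).
Proof.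
move=> esym eirr wsym.
set F := ext f; set G := ext g.
have ews : forall a b, ew e w a b = ew e w b a by move=> a b; rewrite /ew esym wsym.
have step1 : \sum_i \sum_j f i * red_laplacian e w i j * g j =
   \sum_a \sum_b F a * laplacian e w a b * G b.
  rewrite [in RHS]big_ord_recl /F ext0.
  rewrite [X in _ = X + _]big1 ?add0r; last by move=> b _; rewrite !mul0r.
  apply: eq_bigr => i _; rewrite [in RHS]big_ord_recl /G ext0 mulr0 add0r.
  by apply: eq_bigr => j _; rewrite !ext_lift mxE.
have step2 : \sum_a \sum_b F a * laplacian e w a b * G b =
   \sum_a \sum_b ew e w a b * F a * G a - \sum_a \sum_b ew e w a b * F a * G b.
  rewrite -sumrB; apply: eq_bigr => a _.
  have Lpt : forall b, laplacian e w a b = (a == b)%:R * \sum_u ew e w a u - ew e w a b.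
    move=> b; rewrite mxE /ew; case: eqP => [<-|_].
    - by rewrite eirr mul1r subr0 big_mkcond.
    - by rewrite mul0r sub0r; case: (e a b); rewrite ?oppr0.
  under eq_bigr do rewrite Lpt mulrBr mulrBl.
  rewrite sumrB; congr (_ - _); last by apply: eq_bigr => b _; ring.
  rewrite (bigD1 a) //= eqxx [X in _ + X]big1 ?addr0; last first.
    by move=> b /negPf; rewrite eq_sym => ->; rewrite mul0r mulr0 mul0r.
  by rewrite mul1r mulr_sumr mulr_suml; apply: eq_bigr => b _; ring.
rewrite step1 step2 /En.
have E : forall a b, ew e w a b * (F a - F b) * (G a - G b) =
   ew e w a b * F a * G a - ew e w a b * F a * G b
   - ew e w a b * F b * G a + ew e w a b * F b * G b by move=> a b; ring.
rewrite [RHS](eq_bigr (fun a => \sum_b ew e w a b * F a * G a - \sum_b ew e w a b * F a * G b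
   - \sum_b ew e w a b * F b * G a + \sum_b ew e w a b * F b * G b)); last first.
  move=> a _; rewrite -!sumrB -big_split /=; apply: eq_bigr => b _; exact: E.
rewrite !big_split /= !sumrN.
have S4 : \sum_a \sum_b ew e w a b * F b * G b = \sum_a \sum_b ew e w a b * F a * G a.
  rewrite exchange_big /=; apply: eq_bigr => a _; apply: eq_bigr => b _.
  by rewrite ews.
have S3 : \sum_a \sum_b ew e w a b * F b * G a = \sum_a \sum_b ew e w a b * F a * G b.
  rewrite exchange_big /=; apply: eq_bigr => a _; apply: eq_bigr => b _.
  by rewrite ews.
rewrite S4 S3; ring.
Qed.

Lemma ew_ge0 (R : realFieldType) n (e : rel 'I_n.+1) (w : 'I_n.+1 -> 'I_n.+1 -> R) :
  (forall a b, e a b -> 0 < w a b) -> forall a b, 0 <= ew e w a b.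
Proof. by move=> wpos a b; rewrite /ew; case: ifP => // /wpos /ltW. Qed.

Lemma En_ge0 (R : realFieldType) n (e : rel 'I_n.+1) (w : 'I_n.+1 -> 'I_n.+1 -> R) F :
  (forall a b, e a b -> 0 < w a b) -> 0 <= En e w F F.
Proof.
move=> wpos; apply: sumr_ge0 => a _; apply: sumr_ge0 => b _.
by rewrite -mulrA mulr_ge0 ?ew_ge0 // -expr2 sqr_ge0.
Qed.

Lemma En_cs (R : realFieldType) n (e : rel 'I_n.+1) (w : 'I_n.+1 -> 'I_n.+1 -> R) F G :
  (forall a b, e a b -> 0 < w a b) -> En e w F G ^+ 2 <= En e w F F * En e w G G.
Proof.
move=> wpos.
have := @cs_seq R _ (index_enum _) (fun p : 'I_n.+1 * 'I_n.+1 => ew e w p.1 p.2)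
  (fun p => F p.1 - F p.2) (fun p => G p.1 - G p.2) (fun p => ew_ge0 wpos p.1 p.2).
rewrite /En !pair_bigA /=.
have e1 : forall X : 'I_n.+1 * 'I_n.+1 -> R,
  \sum_p ew e w p.1 p.2 * X p ^+ 2 = \sum_p ew e w p.1 p.2 * X p * X p.
  by move=> X; apply: eq_bigr => p _; rewrite expr2 mulrA.
by rewrite (e1 (fun p => F p.1 - F p.2)) (e1 (fun p => G p.1 - G p.2)).
Qed.

Lemma lap_sym (R : ringType) n (e : rel 'I_n.+1) (w : 'I_n.+1 -> 'I_n.+1 -> R) a b :
  symmetric e -> (forall a b, w a b = w b a) -> laplacian e w a b = laplacian e w b a.
Proof.
move=> esym wsym; rewrite !mxE; case: (eqVneq a b) => [->|ab] //.
by rewrite esym wsym.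
Qed.

Lemma path_const (T : eqType) (R : Type) (e : rel T) (F : T -> R) x s :
  (forall a b, e a b -> F a = F b) -> path e x s -> F (last x s) = F x.
Proof.
move=> Fe; elim: s x => [|y s IH] x //= /andP[exy ps].
by rewrite IH // -(Fe _ _ exy).
Qed.

Lemma H_unit (R : realFieldType) n (e : rel 'I_n.+1) (w : 'I_n.+1 -> 'I_n.+1 -> R) :
  symmetric e -> irreflexive e -> (forall u v, connect e u v) ->
  (forall a b, w a b = w b a) -> (forall a b, e a b -> 0 < w a b) ->
  red_laplacian e w \in unitmx.
Proof.
move=> es eirr conn wsym wpos.
rewrite unitmxE unitfE; apply/det0P => -[v vn0 vH].
have Q0 : \sum_i \sum_j v 0 i * red_laplacian e w i j * v 0 j = 0.
  rewrite exchange_big /= big1 // => j _; rewrite -mulr_suml.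
  have := congr1 (fun M : 'M[R]_(1, n) => M 0 j) vH; rewrite !mxE => ->.
  by rewrite mul0r.
have E0 := quad (fun i => v 0 i) (fun i => v 0 i) es eirr wsym.
rewrite Q0 mulr0 in E0.
set F := ext (fun i => v 0 i) in E0.
have tge0 : forall a b, 0 <= ew e w a b * (F a - F b) * (F a - F b).
  by move=> a b; rewrite -mulrA mulr_ge0 ?ew_ge0 // -expr2 sqr_ge0.
have edge : forall a b, e a b -> F a = F b.
  move=> a b eab.
  have inner := psumr_eq0P (fun a _ => sumr_ge0 _ (fun b _ => tge0 a b)) (esym E0).
  have := psumr_eq0P (fun b _ => tge0 a b) (inner a isT) (i := b) isT.
  rewrite /ew eab -mulrA => /eqP; rewrite mulf_eq0 (gt_eqF (wpos _ _ eab)) /=.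
  by rewrite -expr2 sqrf_eq0 subr_eq0 => /eqP.
have all0 : forall b, F b = 0.
  move=> b; case/connectP: (conn ord0 b) => s ps ->.
  by rewrite (path_const edge ps) /F ext0.
apply: (negP vn0); apply/eqP/rowP => i; rewrite mxE.
by have := all0 (lift ord0 i); rewrite /F ext_lift.
Qed.

Lemma Gform (R : realFieldType) n (e : rel 'I_n.+1) (w : 'I_n.+1 -> 'I_n.+1 -> R) a c :
  symmetric e -> irreflexive e -> (forall u v, connect e u v) ->
  (forall a b, w a b = w b a) -> (forall a b, e a b -> 0 < w a b) ->
  2 * invmx (red_laplacian e w) a c =
  En e w (ext (fun i => invmx (red_laplacian e w) i a))
         (ext (fun j => invmx (red_laplacian e w) j c)).
Proof.
move=> esym eirr conn wsym wpos.
have Hu := H_unit esym eirr conn wsym wpos.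
set H := red_laplacian e w; set G := invmx H.
have Gsym : G^T = G.
  have Hs : forall i j, H i j = H j i.
    by move=> i j; rewrite /H /red_laplacian [LHS]mxE [RHS]mxE lap_sym.
  rewrite /G trmx_inv; congr invmx; apply/matrixP => i j.
  by rewrite mxE Hs.
rewrite -quad //; congr (2 * _); symmetry.
transitivity (\sum_i G i a * (H *m G) i c).
  apply: eq_bigr => i _; rewrite mxE mulr_sumr; apply: eq_bigr => j _.
  by rewrite mulrA.
rewrite mulmxV // (bigD1 c) //= mxE eqxx mulr1n mulr1.
rewrite big1 ?addr0 => [|i /negPf ic]; last by rewrite mxE ic mulr0n mulr0.
by have := congr1 (fun M : 'M[R]_n => M a c) Gsym; rewrite mxE.
Qed.

Definition pairs (T : Type) (x : T) (s : seq T) := zip (x :: s) s.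

Lemma tele (R : comRingType) (T : Type) (u : T -> R) x s :
  u (last x s) - u x = \sum_(p <- pairs x s) (u p.2 - u p.1).
Proof.
elim: s x => [|y s IH] x /=; first by rewrite /pairs big_nil subrr.
rewrite /pairs /= big_cons /= -/(pairs y s) -IH.
ring.
Qed.

Lemma pairs_edge (T : eqType) (e : rel T) x s :
  path e x s -> forall p, p \in pairs x s -> e p.1 p.2.
Proof.
elim: s x => [|y s IH] x //= /andP[exy ps] p.
rewrite /pairs /= -/(pairs y s) in_cons => /orP[/eqP -> //|].
exact: IH.
Qed.

Lemma path_wsum (R : realFieldType) (T : eqType) (e : rel T) (rho : T -> T -> R) M x s :
  (forall a b, e a b -> rho a b <= M) -> path e x s ->
  \sum_(p <- pairs x s) rho p.1 p.2 <= (size s)%:R * M.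
Proof.
move=> hM; elim: s x => [|y s IH] x /=; first by rewrite /pairs big_nil mul0r.
move=> /andP[exy ps]; rewrite /pairs /= big_cons /= -/(pairs y s).
by rewrite -add1n natrD mulrDl mul1r lerD ?hM ?IH.
Qed.

Lemma sum_sub_le (R : realFieldType) (T : finType) (A B : {set T}) (F : T -> R) :
  A \subset B -> (forall i, 0 <= F i) ->
  \sum_(i in A) F i <= \sum_(i in B) F i.
Proof.
move=> AB F0; rewrite [X in _ <= X](big_setID A) /= (finset.setIidPr AB) lerDl.
exact: sumr_ge0.
Qed.

Lemma sum_in_le (R : realFieldType) (T : finType) (A : {set T}) (F : T -> R) :
  (forall i, 0 <= F i) -> \sum_(i in A) F i <= \sum_i F i.
Proof.
move=> F0; rewrite big_mkcond; apply: ler_sum => i _.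
by case: ifP.
Qed.

Definition Pset (T : finType) (l : seq T) := [set p : T * T | (p.1 \in l) && (p.2 \in l)].

Lemma path_energy (R : realFieldType) n (e : rel 'I_n.+1) (w : 'I_n.+1 -> 'I_n.+1 -> R)
  (F : 'I_n.+1 -> R) x s :
  symmetric e -> (forall a b, w a b = w b a) -> (forall a b, e a b -> 0 < w a b) ->
  path e x s -> uniq (x :: s) ->
  2 * \sum_(p <- pairs x s) ew e w p.1 p.2 * (F p.1 - F p.2) ^+ 2 <=
  \sum_(p in Pset (x :: s)) ew e w p.1 p.2 * (F p.1 - F p.2) ^+ 2.
Proof.
move=> esym wsym wpos.
set Psi := fun p : 'I_n.+1 * 'I_n.+1 => ew e w p.1 p.2 * (F p.1 - F p.2) ^+ 2.
have Psi0 : forall p, 0 <= Psi p by move=> p; rewrite mulr_ge0 ?ew_ge0 ?sqr_ge0.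
elim: s x => [|y s IH] x /=.
  by move=> _ _; rewrite /pairs big_nil mulr0; apply: sumr_ge0 => p _; apply: Psi0.
move=> /andP[exy ps] /andP[xn us].
rewrite /pairs /= big_cons /= -/(pairs y s).
have IH' := IH y ps us.
have xy : x != y by apply: contraNneq xn => ->; rewrite mem_head.
have n1 : (y, x) \notin Pset (y :: s) by rewrite finset.in_set /= (negPf xn) andbF.
have n2 : (x, y) \notin (y, x) |: Pset (y :: s).
  by rewrite finset.in_setU1 negb_or xpair_eqE (negPf xy) /= finset.in_set /= (negPf xn).
have sub : (x, y) |: ((y, x) |: Pset (y :: s)) \subset Pset (x :: y :: s).
  apply/fintype.subsetP => p; rewrite !finset.in_setU1 !finset.in_set.
  have sys : {subset y :: s <= x :: y :: s} by move=> z zi; rewrite in_cons zi orbT.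
  case/or3P => [/eqP -> | /eqP -> | /andP[h1 h2]] /=.
  - by rewrite mem_head in_cons mem_head orbT.
  - by rewrite mem_head in_cons mem_head orbT.
  - by rewrite !sys.
have := sum_sub_le sub Psi0.
rewrite big_setU1 //= big_setU1 //=.
have sw : Psi (y, x) = Psi (x, y).
  by rewrite /Psi /= /ew esym wsym -opprB sqrrN.
rewrite sw /Psi /=.
move: IH'; rewrite -/Psi.
lra.
Qed.

Lemma Gdiag_bound (R : realFieldType) n (e : rel 'I_n.+1) (rho : 'I_n.+1 -> 'I_n.+1 -> R)
  (dd : nat) (M : R) (c : 'I_n) :
  symmetric e -> irreflexive e -> (forall u v, connect e u v) ->
  (forall a b, rho a b = rho b a) -> (forall a b, e a b -> 0 < rho a b) ->
  (forall a b, e a b -> rho a b <= M) -> 0 <= M ->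
  (forall v, exists s, [/\ path e ord0 s, last ord0 s = v & (size s <= dd)%N]) ->
  0 <= invmx (red_laplacian e (fun a b => (rho a b)^-1)) c c <= dd%:R * M.
Proof.
move=> esym eirr conn rsym rpos rM M0 dep.
set w := fun a b => (rho a b)^-1.
have wsym : forall a b, w a b = w b a by move=> a b; rewrite /w rsym.
have wpos : forall a b, e a b -> 0 < w a b by move=> a b eab; rewrite /w invr_gt0 rpos.
set G := invmx (red_laplacian e w).
set u := ext (fun i => G i c).
have G2 : 2 * G c c = En e w u u by exact: Gform.
have Ege := En_ge0 u wpos.
have Gcc0 : 0 <= G c c by lra.
rewrite Gcc0 /=.
case: (dep (lift ord0 c)) => s [ps ls sz].
move: ls; case: (shortenP ps) => s' ps' us' sub' ls'.
have sz' : (size s' <= dd)%N.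
  apply: leq_trans sz; apply: uniq_leq_size => //; by case/andP: us'.
have T := tele u ord0 s'.
rewrite ls' /u ext_lift ext0 subr0 -/u in T.
set Ps := pairs ord0 s' in T.
have onpath : forall p, p \in Ps -> ew e w p.1 p.2 * rho p.1 p.2 = 1.
  move=> p /(pairs_edge ps') ep; rewrite /ew ep /w mulVf //.
  by rewrite gt_eqF // rpos.
have T2 : G c c = \sum_(p <- Ps) ew e w p.1 p.2 * rho p.1 p.2 * (u p.2 - u p.1).
  rewrite T; apply: eq_big_seq => p pin; by rewrite onpath // mul1r.
have CS := @cs_seq R _ Ps (fun p => ew e w p.1 p.2) (fun p => rho p.1 p.2)
   (fun p => u p.2 - u p.1) (fun p => ew_ge0 wpos p.1 p.2).
rewrite /= -T2 in CS.
have S1 : \sum_(p <- Ps) ew e w p.1 p.2 * rho p.1 p.2 ^+ 2 <= dd%:R * M.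
  rewrite (eq_big_seq (fun p => rho p.1 p.2)); last first.
    by move=> p pin; rewrite expr2 mulrA onpath // mul1r.
  apply: le_trans (path_wsum rM ps') _.
  by rewrite ler_wpM2r // ler_nat.
have S2 : 2 * \sum_(p <- Ps) ew e w p.1 p.2 * (u p.2 - u p.1) ^+ 2 <= 2 * G c c.
  have PE := path_energy u esym wsym wpos ps' us'.
  rewrite (eq_bigr (fun p => ew e w p.1 p.2 * (u p.1 - u p.2) ^+ 2)); last first.
    by move=> p _; rewrite -opprB sqrrN.
  apply: le_trans PE _; rewrite G2.
  apply: le_trans (sum_in_le _ _) _.
    by move=> p; rewrite mulr_ge0 ?ew_ge0 ?sqr_ge0.
  rewrite /En pair_bigA /=; apply: ler_sum => p _; by rewrite expr2 mulrA.
set A := \sum_(p <- Ps) _ in S1 CS.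
set B := \sum_(p <- Ps) _ in S2 CS.
have A0 : 0 <= A by apply: sumr_ge0 => p _; rewrite mulr_ge0 ?ew_ge0 ?sqr_ge0.
have B0 : 0 <= B by apply: sumr_ge0 => p _; rewrite mulr_ge0 ?ew_ge0 ?sqr_ge0.
have K0 : 0 <= dd%:R * M by rewrite mulr_ge0.
nra.
Qed.

Lemma G_bound (R : realFieldType) n (e : rel 'I_n.+1) (rho : 'I_n.+1 -> 'I_n.+1 -> R)
  (dd : nat) (M : R) (a c : 'I_n) :
  symmetric e -> irreflexive e -> (forall u v, connect e u v) ->
  (forall a b, rho a b = rho b a) -> (forall a b, e a b -> 0 < rho a b) ->
  (forall a b, e a b -> rho a b <= M) -> 0 <= M ->
  (forall v, exists s, [/\ path e ord0 s, last ord0 s = v & (size s <= dd)%N]) ->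
  invmx (red_laplacian e (fun a b => (rho a b)^-1)) a c ^+ 2 <= (dd%:R * M) ^+ 2.
Proof.
move=> esym eirr conn rsym rpos rM M0 dep.
have /andP[Ga0 GaK] := Gdiag_bound a esym eirr conn rsym rpos rM M0 dep.
have /andP[Gc0 GcK] := Gdiag_bound c esym eirr conn rsym rpos rM M0 dep.
set w := fun a b => (rho a b)^-1 in Ga0 GaK Gc0 GcK *.
have wsym : forall a b, w a b = w b a by move=> x y; rewrite /w rsym.
have wpos : forall a b, e a b -> 0 < w a b by move=> x y exy; rewrite /w invr_gt0 rpos.
set G := invmx (red_laplacian e w) in Ga0 GaK Gc0 GcK *.
have Eac : 2 * G a c = _ := Gform a c esym eirr conn wsym wpos.
have Eaa : 2 * G a a = _ := Gform a a esym eirr conn wsym wpos.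
have Ecc : 2 * G c c = _ := Gform c c esym eirr conn wsym wpos.
have := En_cs (ext (fun i => G i a)) (ext (fun j => G j c)) wpos.
rewrite -Eac -Eaa -Ecc => CS.
have K0 : 0 <= dd%:R * M by rewrite mulr_ge0.
nra.
Qed.

Definition cv d (T : measurableType d) (R : realType) (P : probability T R) (X Y : T -> R) : R :=
  fine (covariance P X Y).

Lemma cov_fin d (T : measurableType d) (R : realType) (P : probability T R) (X Y : T -> R) :
  X \in Lfun P 2%:E -> Y \in Lfun P 2%:E -> covariance P X Y \is a fin_num.
Proof.
move=> X2 Y2.
have Pfin : P setT \is a fin_num := fin_num_measure P _ measurableT.
by rewrite covariance_fin_num ?Lfun2_mul_Lfun1 ?Lfun_subset12.
Qed.

Lemma cvDl d (T : measurableType d) (R : realType) (P : probability T R) (X Y Z : T -> R) :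
  X \in Lfun P 2%:E -> Y \in Lfun P 2%:E -> Z \in Lfun P 2%:E ->
  cv P (X \+ Y) Z = cv P X Z + cv P Y Z.
Proof.
by move=> X2 Y2 Z2; rewrite /cv covarianceDl // fineD // cov_fin.
Qed.

Lemma cvC d (T : measurableType d) (R : realType) (P : probability T R) (X Y : T -> R) :
  cv P X Y = cv P Y X.
Proof. by rewrite /cv covarianceC. Qed.

Lemma cvZl d (T : measurableType d) (R : realType) (P : probability T R) a (X Y : T -> R) :
  X \in Lfun P 2%:E -> Y \in Lfun P 2%:E ->
  cv P (a \o* X) Y = a * cv P X Y.
Proof.
move=> X2 Y2.
have Pfin : P setT \is a fin_num := fin_num_measure P _ measurableT.
rewrite /cv covarianceZl ?Lfun2_mul_Lfun1 ?Lfun_subset12 //.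
rewrite -[covariance P X Y](fineK (cov_fin X2 Y2)) -EFinM.
by [].
Qed.

Lemma L2Z d (T : measurableType d) (R : realType) (P : probability T R) a (X : T -> R) :
  X \in Lfun P 2%:E -> (a \o* X) \in Lfun P 2%:E.
Proof. by move=> X2; apply: Lfun_scale => //; rewrite ler1n. Qed.

Lemma L2D d (T : measurableType d) (R : realType) (P : probability T R) (X Y : T -> R) :
  X \in Lfun P 2%:E -> Y \in Lfun P 2%:E -> (X \+ Y) \in Lfun P 2%:E.
Proof. by move=> X2 Y2; apply: rpredD => //; rewrite lee_fin ler1n. Qed.

Lemma cv_sum_l d (T : measurableType d) (R : realType) (P : probability T R) (I : Type)
   (s : seq I) (X : I -> T -> R) (Z : T -> R) :
  (forall i, X i \in Lfun P 2%:E) -> Z \in Lfun P 2%:E ->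
  (\sum_(i <- s) X i) \in Lfun P 2%:E /\
  cv P (\sum_(i <- s) X i) Z = \sum_(i <- s) cv P (X i) Z.
Proof.
move=> X2 Z2; elim: s => [|i s [IH1 IH2]].
  rewrite !big_nil; have -> : (0 : T -> R) = cst 0 by [].
  by rewrite /cv covariance_cst_l; split => //; exact: Lfun_cst.
rewrite !big_cons; split.
  by apply: rpredD => //; rewrite lee_fin ler1n.
by rewrite -IH2 cvDl.
Qed.

Lemma cvDr d (T : measurableType d) (R : realType) (P : probability T R) (X Y Z : T -> R) :
  X \in Lfun P 2%:E -> Y \in Lfun P 2%:E -> Z \in Lfun P 2%:E ->
  cv P X (Y \+ Z) = cv P X Y + cv P X Z.
Proof. by move=> X2 Y2 Z2; rewrite cvC cvDl // !(cvC _ X). Qed.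

Lemma cvZr d (T : measurableType d) (R : realType) (P : probability T R) a (X Y : T -> R) :
  X \in Lfun P 2%:E -> Y \in Lfun P 2%:E ->
  cv P X (a \o* Y) = a * cv P X Y.
Proof. by move=> X2 Y2; rewrite cvC cvZl // cvC. Qed.

Lemma cvY d (T : measurableType d) (R : realType) (P : probability T R) a b a' b'
  (X1 X2 Z1 Z2 : T -> R) :
  X1 \in Lfun P 2%:E -> X2 \in Lfun P 2%:E -> Z1 \in Lfun P 2%:E -> Z2 \in Lfun P 2%:E ->
  cv P (a \o* X1 \+ b \o* X2) (a' \o* Z1 \+ b' \o* Z2) =
  a * a' * cv P X1 Z1 + a * b' * cv P X1 Z2 + b * a' * cv P X2 Z1 + b * b' * cv P X2 Z2.
Proof.
move=> h1 h2 h3 h4.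
rewrite cvDl ?L2Z ?L2D //.
rewrite !cvDr ?L2Z // !cvZl ?L2Z // !cvZr //.
ring.
all: by rewrite L2Z.
Qed.

Unset Implicit Arguments. Set Strict Implicit.
Local Open Scope classical_set_scope.
Local Open Scope ring_scope.

Theorem theorem11 (R : realType) (d : measure_display) (T : measurableType d)
  (P : probability T R) (n : nat) (e : rel 'I_n.+1) (dd : nat)
  (r x : 'I_n.+1 -> 'I_n.+1 -> R) (p q : 'I_n -> {RV P >-> R}) :
  is_tree e -> root_degree_one e -> depth e dd ->
  (forall a b, e a b -> 0 < r a b /\ 0 < x a b) ->
  (forall a b, r a b = r b a /\ x a b = x b a) ->
  jointly_centered_gaussian P (fun c => p c : T -> R) (fun c => q c : T -> R) ->
  (forall c, (p c : T -> R) \in Lfun P 2%:E /\ (q c : T -> R) \in Lfun P 2%:E) ->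
  (forall a b, a != b ->
     [/\ covariance P (p a) (p b) = 0%E, covariance P (q a) (q b) = 0%E
       & covariance P (q a) (p b) = 0%E]) ->
  (forall a, (0 <= covariance P (q a) (p a))%E) ->
  let rmax := line_max e r in
  let xmax := line_max e x in
  let k2 := Num.max (rmax ^+ 2) (xmax ^+ 2) *
     \big[Num.max/0]_(c < n) (fine 'V_P[p c] + fine 'V_P[q c]
                              + 2 * fine (covariance P (p c) (q c))) in
  forall a : 'I_n,
    ('V_P[lcpf_v e r x (fun c => p c : T -> R) (fun c => q c : T -> R) a]
       <= ((dd ^ 2 * n.+1)%:R * k2)%:E)%E.
Proof.
move=> [esym eirr conn _] _ [dep _] pos sym _ L2 covs cqp0 rmax xmax k2 a.
have rsym : forall a b, r a b = r b a by move=> u v; case: (sym u v).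
have xsym : forall a b, x a b = x b a by move=> u v; case: (sym u v).
have rpos : forall a b, e a b -> 0 < r a b by move=> u v /pos [].
have xpos : forall a b, e a b -> 0 < x a b by move=> u v /pos [].
have rM : forall a b, e a b -> r a b <= rmax.
  by move=> u v euv; apply/bigmax_geP; right; exists (u, v).
have xM : forall a b, e a b -> x a b <= xmax.
  by move=> u v euv; apply/bigmax_geP; right; exists (u, v).
have rmax0 : 0 <= rmax by apply/bigmax_geP; left.
have xmax0 : 0 <= xmax by apply/bigmax_geP; left.
set A := invmx (red_laplacian e (fun u w => (r u w)^-1)).
set B := invmx (red_laplacian e (fun u w => (x u w)^-1)).
have hA : forall c, A a c ^+ 2 <= (dd%:R * rmax) ^+ 2.
  by move=> c; apply: G_bound.
have hB : forall c, B a c ^+ 2 <= (dd%:R * xmax) ^+ 2.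
  by move=> c; apply: G_bound.
set Y := fun c => (A a c \o* (p c : T -> R)) \+ (B a c \o* (q c : T -> R)).
have Y2 : forall c, Y c \in Lfun P 2%:E.
  by move=> c; apply: L2D; apply: L2Z; case: (L2 c).
have veq : lcpf_v e r x (fun c => p c : T -> R) (fun c => q c : T -> R) a = \sum_(c < n) Y c.
  rewrite fct_sumE /lcpf_v; apply: funext => t; apply: eq_bigr => c _.
  by rewrite /Y /= [p c t * _]mulrC [q c t * _]mulrC.
rewrite veq.
have [v2 _] := cv_sum_l (index_enum 'I_n) Y2 (Y2 a).
set v := \sum_(c < n) Y c in v2 *.
rewrite /variance -(fineK (cov_fin v2 v2)) lee_fin -/(cv P v v).
have E1 : cv P v v = \sum_(c < n) \sum_(c' < n) cv P (Y c') (Y c).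
  have [_ ->] := cv_sum_l (index_enum 'I_n) Y2 v2.
  apply: eq_bigr => c _; rewrite cvC.
  by have [_ ->] := cv_sum_l (index_enum 'I_n) Y2 (Y2 c).
have off : forall c c', c' != c -> cv P (Y c') (Y c) = 0.
  move=> c c' ne.
  have [pc qc] := L2 c; have [pc' qc'] := L2 c'.
  rewrite /Y cvY //.
  have [h1 h2 h3] := covs c' c ne.
  have ne' : c != c' by rewrite eq_sym.
  have [_ _ h4] := covs c c' ne'.
  rewrite /cv h1 h2 h3 (covarianceC P (p c') (q c)) h4 /=.
  by rewrite !mulr0 !addr0.
have E2 : cv P v v = \sum_(c < n) cv P (Y c) (Y c).
  rewrite E1; apply: eq_bigr => c _; rewrite (bigD1 c) //= big1 ?addr0 //.
  by move=> c' ne; apply: off.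
pose Mx := Num.max (rmax ^+ 2) (xmax ^+ 2).
pose K := \big[Num.max/0]_(c < n) (fine 'V_P[p c] + fine 'V_P[q c]
                              + 2 * fine (covariance P (p c) (q c))).
pose D := dd%:R ^+ 2 * Mx.
have Mx0 : 0 <= Mx by rewrite le_max sqr_ge0.
have D0 : 0 <= D by rewrite mulr_ge0 ?exprn_ge0 ?ler0n.
have K0 : 0 <= K by apply/bigmax_geP; left.
have term : forall c, cv P (Y c) (Y c) <= D * (fine 'V_P[p c] + fine 'V_P[q c]
                              + 2 * fine (covariance P (p c) (q c))).
  move=> c; have [pc qc] := L2 c; rewrite /Y cvY //.
  have Vp0 : 0 <= cv P (p c) (p c) by rewrite /cv fine_ge0 // (variance_ge0 P (p c)).
  have Vq0 : 0 <= cv P (q c) (q c) by rewrite /cv fine_ge0 // (variance_ge0 P (q c)).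
  have C0 : 0 <= cv P (p c) (q c) by rewrite /cv covarianceC fine_ge0 // cqp0.
  have Cs : cv P (q c) (p c) = cv P (p c) (q c) by apply: cvC.
  rewrite Cs.
  change (fine 'V_P[p c]) with (cv P (p c) (p c)).
  change (fine 'V_P[q c]) with (cv P (q c) (q c)).
  change (fine (covariance P (p c) (q c))) with (cv P (p c) (q c)).
  have aD : A a c ^+ 2 <= D.
    apply: le_trans (hA c) _; rewrite exprMn ler_wpM2l ?exprn_ge0 ?ler0n //.
    by rewrite le_max lexx.
  have bD : B a c ^+ 2 <= D.
    apply: le_trans (hB c) _; rewrite exprMn ler_wpM2l ?exprn_ge0 ?ler0n //.
    by rewrite le_max lexx orbT.
  have h1 : 0 <= (D - A a c ^+ 2) * cv P (p c) (p c) by rewrite mulr_ge0 // subr_ge0.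
  have h2 : 0 <= (D - B a c ^+ 2) * cv P (q c) (q c) by rewrite mulr_ge0 // subr_ge0.
  have h3 : 0 <= (D - A a c ^+ 2) * cv P (p c) (q c) by rewrite mulr_ge0 // subr_ge0.
  have h4 : 0 <= (D - B a c ^+ 2) * cv P (p c) (q c) by rewrite mulr_ge0 // subr_ge0.
  have h5 : 0 <= (A a c - B a c) ^+ 2 * cv P (p c) (q c) by rewrite mulr_ge0 ?sqr_ge0.
  nra.
rewrite E2 /k2 -/Mx -/K.
apply: le_trans (ler_sum _ (fun c _ => term c)) _.
apply: (@le_trans _ _ (\sum_(c < n) D * K)).
  apply: ler_sum => c _; rewrite ler_wpM2l //.
  exact: (le_bigmax 0 (fun c : 'I_n => fine 'V_P[p c] + fine 'V_P[q c]
                              + 2 * fine (covariance P (p c) (q c))) c).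
rewrite sumr_const card_ord -mulr_natr natrM natrX -[n.+1]addn1 natrD /D.
have DK0 : 0 <= dd%:R ^+ 2 * Mx * K by rewrite mulr_ge0 // mulr_ge0 ?exprn_ge0 ?ler0n.
nra.
Qed.
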